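(* Let $n\ge2$ and let $\mathbf{r}$ be an $\mathbb{R}^n$-valued random vector with $\mathbb{E}|r_i|<\infty$ for all $i$; set $\mathbf{R}=e^{\mathbf{r}}$ (componentwise), $\mathbf{m}=\mathbb{E}[\mathbf{r}]$, and $J(\boldsymbol{\pi})=\mathbb{E}[\log\langle\boldsymbol{\pi},\mathbf{R}\rangle]-\langle\boldsymbol{\pi},\mathbf{m}\rangle$ for $\boldsymbol{\pi}\in\Delta_n$. If $\boldsymbol{\pi}^\star$ maximizes $J$ over $\Delta_n$, then for every $\boldsymbol{\pi}\in\Delta_n$, $$\mathbb{E}\Big[\log\frac{\langle\boldsymbol{\pi},\mathbf{R}\rangle}{\langle\boldsymbol{\pi}^\star,\mathbf{R}\rangle}\Big]\le\log\big(1+\langle\boldsymbol{\pi}-\boldsymbol{\pi}^\star,\mathbf{m}\rangle\big).$$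
   Context: $\Delta_n=\{\mathbf{x}\in[0,1]^n:\sum_ix_i=1\}$. $J(\boldsymbol{\pi})$ equals $\mathbb{E}[\gamma(\boldsymbol{\pi},\mathbf{r})]$ where $\gamma(\boldsymbol{\pi},\mathbf{r})=\log\big(\sum_{i:\pi_i>0}\pi_ie^{r_i}\big)-\sum_{i:\pi_i>0}\pi_ir_i$. *)

(* Defs.v *)
From HB Require Import structures.
From mathcomp Require Import all_boot all_order all_algebra.
From mathcomp Require Import all_classical all_reals all_analysis.
Set Implicit Arguments. Unset Strict Implicit. Unset Printing Implicit Defensive.
Import Order.TTheory GRing.Theory Num.Theory.
Local Open Scope ring_scope.

Definition simplex (R : realType) (n : nat) (x : 'I_n -> R) : Prop :=
  (forall i, 0 <= x i <= 1) /\ \sum_(i < n) x i = 1.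

Definition pR (R : realType) (n : nat) (T : Type) (r : T -> 'I_n -> R)
  (p : 'I_n -> R) (w : T) : R := \sum_(i < n) p i * expR (r w i).

Definition meanr (R : realType) (d : measure_display) (T : measurableType d)
  (P : probability T R) (n : nat) (r : T -> 'I_n -> R) (i : 'I_n) : R :=
  Rintegral P setT (fun w => r w i).

Definition Jobj (R : realType) (d : measure_display) (T : measurableType d)
  (P : probability T R) (n : nat) (r : T -> 'I_n -> R) (p : 'I_n -> R) : R :=
  Rintegral P setT (fun w => ln (pR r p w)) - \sum_(i < n) p i * meanr P r i.

(* Main.v *)
Require Import Defs.
From HB Require Import structures.
From mathcomp Require Import all_boot all_order all_algebra.
From mathcomp Require Import all_classical all_reals all_analysis.
From mathcomp Require Import ring lra measurable_realfun.
Import Order.TTheory GRing.Theory Num.Theory.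
Import numFieldNormedType.Exports.
Local Open Scope ring_scope.


Lemma conc_ln (R : realType) (l b : R) : 0 <= l -> l <= 1 -> 0 < b ->
  l * ln b <= ln (1 - l + l * b).
Proof.
move=> l0 l1 b0.
have := @concave_ln R (Itv01 l0 l1) b 1 b0 ltr01.
rewrite !convRE /= ln1 mulr0 addr0 mulr1 => H.
  idtac.
by move: H; rewrite /unstable.onem addrC.
Qed.

Lemma ln_lb (R : realType) (x : R) : 0 < x -> 1 - x^-1 <= ln x.
Proof.
move=> x0.
have := @le_ln1Dx R (x^-1 - 1).
rewrite (_ : 1 + (x^-1 - 1) = x^-1); last by rewrite addrC subrK.
rewrite lnV ?posrE // => H.
have xi : 0 < x^-1 by rewrite invr_gt0.
have : - ln x <= x^-1 - 1 by apply: H; lra.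
lra.
Qed.

Lemma cvg_aln (R : realType) (u : R) : -1 < u ->
  (k.+1%:R * ln (1 + k.+1%:R^-1 * u) @[k --> \oo] --> u)%classic.
Proof.
move=> u1.
apply: (@squeeze_cvgr _ _ _ _ (fun k => u - 2 * u ^+ 2 * harmonic k) (fun=> u)).
- near=> k.
  have a2 : (2 : R) <= k.+1%:R.
    rewrite ler_nat ltnS.
    by near: k; apply: nbhs_infty_ge.
  set a := k.+1%:R in a2 *.
  have a0 : 0 < a by lra.
  set h := a^-1 * u.
  have hu : u = a * h by rewrite /h mulrA mulfV ?mulr1 ?mul1r // gt_eqF.
  have h2 : -1 / 2 < h.
    have : a * (-1/2) < a * h by rewrite -hu; lra.
    by rewrite ltr_pM2l.
  have h1 : 0 < 1 + h by lra.
  apply/andP; split; last first.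
    have := @le_ln1Dx R h ltac:(lra) => H.
    by rewrite hu ler_pM2l.
  rewrite /= -/a.
  have := @ln_lb R (1 + h) h1 => H.
  have H2 : h - 2 * h ^+ 2 <= 1 - (1 + h)^-1.
    have -> : 1 - (1 + h)^-1 = h / (1 + h).
      by field; lra.
    rewrite ler_pdivlMr //.
    have : 0 <= h ^+ 2 * (1 + 2 * h) by apply: mulr_ge0; [apply: sqr_ge0 | lra].
    lra.
  have : a * (h - 2 * h ^+ 2) <= a * ln (1 + h).
    by rewrite ler_pM2l //; lra.
  have -> : u - 2 * u ^+ 2 / a = a * (h - 2 * h ^+ 2).
    by rewrite hu; field; lra.
  by [].
- have H : ((u - 2 * u ^+ 2 * harmonic k) @[k --> \oo] --> u - 2 * u ^+ 2 * 0)%classic.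
    apply: cvgB; first exact: cvg_cst.
    apply: cvgMl_tmp; exact: cvg_harmonic.
  by rewrite mulr0 subr0 in H.
- exact: cvg_cst.
Unshelve. all: end_near.
Qed.


Set Implicit Arguments. Unset Strict Implicit.
Section part2.
Local Open Scope classical_set_scope.

Lemma M_bound (R : realType) (T : Type) (n : nat) (r : T -> 'I_n -> R) w i :
  `|r w i| <= \sum_(j < n) `|r w j|.
Proof.
rewrite (bigD1 i) //= lerDl; apply: sumr_ge0 => j _; exact: normr_ge0.
Qed.

Lemma pR_bounds (R : realType) (T : Type) (n : nat) (r : T -> 'I_n -> R)
  (q : 'I_n -> R) (hq : simplex q) w :
  expR (- \sum_(j < n) `|r w j|) <= pR r q w <= expR (\sum_(j < n) `|r w j|).
Proof.
case: hq => hq1 hq2.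
set M := \sum_(j < n) `|r w j|.
have hM i : - M <= r w i <= M.
  have := M_bound r w i; rewrite -/M => H.
  have := ler_norm (r w i); have := ler_norm (- r w i); rewrite normrN.
  move=> h1 h2; apply/andP; split; lra.
apply/andP; split.
- have -> : expR (- M) = \sum_(i < n) q i * expR (- M).
    by rewrite -mulr_suml hq2 mul1r.
  apply: ler_sum => i _; apply: ler_wpM2l; first by case/andP: (hq1 i).
  by rewrite ler_expR; case/andP: (hM i).
- have -> : expR M = \sum_(i < n) q i * expR M.
    by rewrite -mulr_suml hq2 mul1r.
  apply: ler_sum => i _; apply: ler_wpM2l; first by case/andP: (hq1 i).
  by rewrite ler_expR; case/andP: (hM i).
Qed.

Lemma pR_gt0 (R : realType) (T : Type) (n : nat) (r : T -> 'I_n -> R)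
  (q : 'I_n -> R) (hq : simplex q) w : 0 < pR r q w.
Proof.
by case/andP: (pR_bounds r hq w) => h _; apply: lt_le_trans h; exact: expR_gt0.
Qed.

Lemma ln_pR_bound (R : realType) (T : Type) (n : nat) (r : T -> 'I_n -> R)
  (q : 'I_n -> R) (hq : simplex q) w :
  `|ln (pR r q w)| <= \sum_(j < n) `|r w j|.
Proof.
case/andP: (pR_bounds r hq w) => h1 h2.
have p0 := pR_gt0 r hq w.
rewrite ler_norml; apply/andP; split.
- by rewrite -[X in X <= _]expRK ler_ln ?posrE ?expR_gt0.
- by rewrite -[X in _ <= X]expRK ler_ln ?posrE ?expR_gt0.
Qed.

Lemma mr (R : realType) (d : measure_display) (T : measurableType d)
  (P : probability T R) (n : nat) (r : T -> 'I_n -> R)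
  (hint : forall i : 'I_n, P.-integrable setT (fun w => (r w i)%:E)) i :
  measurable_fun setT (fun w => r w i).
Proof. by apply/measurable_EFinP; exact: (measurable_int P (hint i)). Qed.

Lemma int_M (R : realType) (d : measure_display) (T : measurableType d)
  (P : probability T R) (n : nat) (r : T -> 'I_n -> R)
  (hint : forall i : 'I_n, P.-integrable setT (fun w => (r w i)%:E)) :
  P.-integrable setT (EFin \o (fun w => \sum_(j < n) `|r w j|)).
Proof.
have H : P.-integrable setT (fun w => \sum_(j < n) `|(r w j)%:E|%E).
  apply: (integrable_sum measurableT) => i _.
  exact: (integrable_abse (hint i)).
apply: (eq_integrable measurableT _ _ _ H) => w _ /=.
by rewrite -sumEFin.
Qed.

Lemma int_lnpR (R : realType) (d : measure_display) (T : measurableType d)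
  (P : probability T R) (n : nat) (r : T -> 'I_n -> R)
  (hint : forall i : 'I_n, P.-integrable setT (fun w => (r w i)%:E))
  (q : 'I_n -> R) (hq : simplex q) :
  P.-integrable setT (EFin \o (fun w => ln (pR r q w))).
Proof.
apply: (le_integrable measurableT _ _ (int_M hint)).
- apply/measurable_EFinP; apply: measurableT_comp; first exact: measurable_ln.
  rewrite /pR; apply: measurable_sum => i.
  apply: measurable_funM; first exact: measurable_cst.
  apply: measurableT_comp; first exact: measurable_expR.
  exact: (mr hint).
- move=> w _ /=; rewrite lee_fin.
  rewrite (ger0_norm (sumr_ge0 _ _)); last by move=> *; exact: normr_ge0.
  exact: ln_pR_bound.
Qed.

End part2.

Lemma G_mono (R : realType) (x a b : R) : 0 < x -> 1 <= a -> a <= b ->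
  a * ln (1 + a^-1 * (x - 1)) <= b * ln (1 + b^-1 * (x - 1)).
Proof.
move=> x0 a1 ab.
have a0 : 0 < a by lra.
have b0 : 0 < b by lra.
have ai0 : 0 < a^-1 by rewrite invr_gt0.
have ai1 : a^-1 <= 1 by rewrite invf_le1.
have bb0 : 0 < 1 + a^-1 * (x - 1).
  have : 0 < a^-1 * x by apply: mulr_gt0.
  have -> : 1 + a^-1 * (x - 1) = (1 - a^-1) + a^-1 * x by ring.
  lra.
have l0 : 0 <= a / b by apply: divr_ge0; lra.
have l1 : a / b <= 1 by rewrite ler_pdivrMr // mul1r.
have := @conc_ln R (a / b) _ l0 l1 bb0.
have -> : 1 - a / b + a / b * (1 + a^-1 * (x - 1)) = 1 + b^-1 * (x - 1).
  by field; apply/andP; split; lra.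
move=> H.
have : b * (a / b * ln (1 + a^-1 * (x - 1))) <= b * ln (1 + b^-1 * (x - 1)).
  by rewrite ler_pM2l.
by rewrite mulrA mulrCA mulfV ?gt_eqF // mulr1.
Qed.

Theorem mainTheorem20 (R : realType) (d : measure_display) (T : measurableType d)
  (P : probability T R) (n : nat) (r : T -> 'I_n -> R)
  (hn : (2 <= n)%N)
  (hint : forall i : 'I_n, P.-integrable setT (fun w => (r w i)%:E))
  (pstar : 'I_n -> R) (hpstar : simplex pstar)
  (hmax : forall p : 'I_n -> R, simplex p -> Jobj P r p <= Jobj P r pstar) :
  forall p : 'I_n -> R, simplex p ->
    Rintegral P setT (fun w => ln (pR r p w / pR r pstar w))
    <= ln (1 + \sum_(i < n) (p i - pstar i) * meanr P r i).
Proof.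
move=> p hp.
pose S := fun w => pR r pstar w.
pose Q := fun w => pR r p w.
pose X := fun w => Q w / S w.
pose c := \sum_(i < n) (p i - pstar i) * meanr P r i.
pose L := fun w => ln (X w).
have S0 w : 0 < S w := pR_gt0 r hpstar w.
have Q0 w : 0 < Q w := pR_gt0 r hp w.
have X0 w : 0 < X w by rewrite /X divr_gt0.
have LE w : L w = ln (Q w) - ln (S w) by rewrite /L /X ln_div ?posrE.
have intS := int_lnpR hint hpstar.
have intQ := int_lnpR hint hp.
have intL : P.-integrable setT (EFin \o L).
  apply: (eq_integrable measurableT _ _ _ (integrableB measurableT intQ intS)).
  by move=> w _ /=; rewrite LE.
pose q (t : R) := fun i => pstar i + t * (p i - pstar i).
have hq t : 0 <= t <= 1 -> simplex (q t).
  move=> /andP[t0 t1]; case: (hp) => hp1 hp2; case: (hpstar) => hs1 hs2; split.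
  - move=> i; case/andP: (hp1 i) => a1 a2; case/andP: (hs1 i) => b1 b2.
    rewrite /q; apply/andP; split; nra.
  - rewrite /q big_split /= -mulr_sumr sumrB hp2 hs2; ring.
have pRq t w : pR r (q t) w = S w + t * (Q w - S w).
  rewrite /pR /S /Q /pR -sumrB mulr_sumr -big_split /=.
  by apply: eq_bigr => i _; rewrite /q; ring.
pose H (t : R) := fun w => ln (1 + t * (X w - 1)).
have HE t w : 0 <= t <= 1 -> H t w = ln (pR r (q t) w) - ln (S w).
  move=> ht; rewrite -ln_div ?posrE; last 2 first.
  - exact: (pR_gt0 r (hq t ht)).
  - exact: S0.
  rewrite pRq /H /X; congr ln; field; by rewrite gt_eqF.
have intH t : 0 <= t <= 1 -> P.-integrable setT (EFin \o H t).
  move=> ht.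
  apply: (eq_integrable measurableT _ _ _
    (integrableB measurableT (int_lnpR hint (hq t ht)) intS)).
  by move=> w _ /=; rewrite HE.
have sumq t : \sum_(i < n) q t i * meanr P r i
    = \sum_(i < n) pstar i * meanr P r i + t * c.
  rewrite /c mulr_sumr -big_split /=; apply: eq_bigr => i _; rewrite /q; ring.
have boundH t : 0 <= t <= 1 -> Rintegral P setT (H t) <= t * c.
  move=> ht; have := hmax _ (hq t ht); rewrite /Jobj sumq.
  have -> : Rintegral P setT (H t) = Rintegral P setT (fun w => ln (pR r (q t) w))
      - Rintegral P setT (fun w => ln (pR r pstar w)).
    rewrite -(RintegralB measurableT (int_lnpR hint (hq t ht)) intS).
    by apply: eq_Rintegral => w _; exact: HE.
  lra.
pose a (k : nat) : R := k.+1%:R.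
have a1 k : 1 <= a k by rewrite /a ler1n.
have a0 k : 0 < a k by apply: lt_le_trans (a1 k).
have tk k : 0 <= (a k)^-1 <= 1.
  by rewrite invr_ge0 invf_le1 // a1 ltW.
pose g (k : nat) := fun w => ((a k * H (a k)^-1 w - L w)%:E).
have g0 k w : (0 <= g k w)%E.
  rewrite /g lee_fin subr_ge0.
  have e : 1 + 1^-1 * (X w - 1) = X w by rewrite invr1 mul1r addrC subrK.
  by have := G_mono (X0 w) (lexx 1) (a1 k); rewrite e mul1r.
have nd w : {homo g^~ w : m k / (m <= k)%N >-> (m <= k)%E}.
  move=> m k mk; rewrite /g lee_fin lerD2r.
  by apply: G_mono => //; rewrite /a ler_nat.
have mL : measurable_fun setT L by apply/measurable_EFinP; exact: measurable_int intL.
have mg k : measurable_fun setT (g k).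
  apply/measurable_EFinP; apply: measurable_funB => //.
  apply: measurable_funM; first exact: measurable_cst.
  by apply/measurable_EFinP; exact: measurable_int (intH _ (tk k)).
have lim_g w : limn (g^~ w) = (X w - 1 - L w)%:E.
  have hc : ((a k * H (a k)^-1 w - L w) @[k --> \oo] --> (X w - 1 - L w))%classic.
    apply: cvgB; last exact: cvg_cst.
    apply: cvg_aln; have := X0 w; lra.
  rewrite (_ : g^~ w = EFin \o (fun k => a k * H (a k)^-1 w - L w)) //.
  by rewrite EFin_lim ?(cvg_lim _ hc) //; exact: (cvgP _ hc).
have intZ k : P.-integrable setT (EFin \o (fun w => a k * H (a k)^-1 w)).
  apply: (eq_integrable measurableT _ _ _
    (integrableZl measurableT (a k) (intH _ (tk k)))).
  by move=> w _.
have intG k : P.-integrable setT (EFin \o (fun w => a k * H (a k)^-1 w - L w)).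
  apply: (eq_integrable measurableT _ _ _ (integrableB measurableT (intZ k) intL)).
  by move=> w _.
have boundg k : (\int[P]_(w in setT) g k w <= (c - Rintegral P setT L)%:E)%E.
  have -> : (\int[P]_(w in setT) g k w)%E
      = (Rintegral P setT (fun w => a k * H (a k)^-1 w - L w))%:E.
    by rewrite /Rintegral fineK //; exact: (integrable_fin_num measurableT (intG k)).
  rewrite lee_fin.
  rewrite (RintegralB measurableT (intZ k) intL).
  rewrite (RintegralZl _ measurableT (intH _ (tk k))).
  rewrite lerD2r.
  have := boundH _ (tk k) => hb.
  have : a k * Rintegral P setT (H (a k)^-1) <= a k * ((a k)^-1 * c).
    by rewrite ler_pM2l.
  by rewrite mulrA mulfV ?gt_eqF // mul1r.
pose Y := fun w => X w - 1 - L w.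
have Y0 w : 0 <= Y w.
  rewrite /Y subr_ge0.
  have := @le_ln1Dx R (X w - 1).
  rewrite (_ : 1 + (X w - 1) = X w); last by rewrite addrC subrK.
  apply.
  have := X0 w; lra.
have mct := @monotone_convergence _ T R P setT measurableT g mg
  (fun k w _ => g0 k w) (fun w _ => nd w).
have intY_le : (\int[P]_(w in setT) (Y w)%:E <= (c - Rintegral P setT L)%:E)%E.
  rewrite (eq_integral (fun x => limn (g^~ x))); last first.
    by move=> w _; rewrite lim_g.
  rewrite mct; apply: lime_le.
  - apply: ereal_nondecreasing_is_cvgn => m k mk.
    apply: ge0_le_integral => //.
    by move=> w _; exact: nd.
  - by apply: nearW => k; exact: boundg.
have mX : measurable_fun setT X.
  apply: (eq_measurable_fun (fun w => expR (L w))).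
    by move=> w _; rewrite /L lnK // posrE.
  exact: measurableT_comp.
have intY : P.-integrable setT (EFin \o Y).
  apply/integrableP; split.
    by apply/measurable_EFinP; apply: measurable_funB => //; apply: measurable_funB.
  rewrite (eq_integral (fun w => (Y w)%:E)); last first.
    by move=> w _ /=; rewrite ger0_norm.
  by apply: le_lt_trans intY_le _; rewrite ltry.
have int1 : P.-integrable setT (EFin \o (fun _ : T => (1 : R))).
  exact: (finite_measure_integrable_cst P 1 measurableT).
have intY1 : P.-integrable setT (EFin \o (fun w => Y w + 1)).
  by apply: (eq_integrable measurableT _ _ _ (integrableD measurableT intY int1)).
have intX : P.-integrable setT (EFin \o X).
  apply: (eq_integrable measurableT _ _ _ (integrableD measurableT intY1 intL)).
  by move=> w _ /=; rewrite -EFinD /Y; congr EFin; ring.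
have RY : Rintegral P setT Y <= c - Rintegral P setT L.
  rewrite -lee_fin; apply: le_trans intY_le.
  by rewrite /Rintegral fineK //; exact: (integrable_fin_num measurableT intY).
have R1 : Rintegral P setT (fun _ => (1 : R)) = 1.
  rewrite Rintegral_cst // mul1r.
  have h1 : P setT = 1%E := probability_setT P.
  exact: (congr1 fine h1).
have R1' : fine (P setT) = 1.
  have h1 : P setT = 1%E := probability_setT P.
  exact: (congr1 fine h1).
have RX : Rintegral P setT X = Rintegral P setT Y + 1 + Rintegral P setT L.
  have -> : Rintegral P setT X = Rintegral P setT (fun w => (Y w + 1) + L w).
    by apply: eq_Rintegral => w _; rewrite /Y /X; lra.
  by rewrite (RintegralD measurableT intY1 intL) (RintegralD measurableT intY int1) R1.
have RXle : Rintegral P setT X <= 1 + c by lra.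
change (Rintegral P setT L <= ln (1 + c)).
have lnX1 w : L w <= X w - 1 by have := Y0 w; rewrite /Y; lra.
case: (leP (1 + c) 0) => hc.
- rewrite ln0 //.
  have intXm : P.-integrable setT (EFin \o (fun w => X w - 1)).
    by apply: (eq_integrable measurableT _ _ _ (integrableB measurableT intX int1)).
  have := le_Rintegral measurableT intL intXm (fun w _ => lnX1 w).
  rewrite (RintegralB measurableT intX int1) R1.
  lra.
- set K := 1 + c.
  have K0 : 0 < K by [].
  have hpt w : L w <= X w * K^-1 + (ln K - 1).
    have := @le_ln1Dx R (X w * K^-1 - 1).
    rewrite (_ : 1 + (X w * K^-1 - 1) = X w / K); last by rewrite addrC subrK.
    rewrite ln_div ?posrE //.
    move=> h; have : ln (X w) - ln K <= X w * K^-1 - 1.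
      apply: h; have : 0 < X w * K^-1 by rewrite divr_gt0.
      lra.
    rewrite /L; lra.
  have intXZ : P.-integrable setT (EFin \o (fun w => X w * K^-1)).
    apply: (eq_integrable measurableT _ _ _ (integrableZr measurableT K^-1 intX)).
    by move=> w _.
  have intc : P.-integrable setT (EFin \o (fun _ : T => ln K - 1)).
    exact: (finite_measure_integrable_cst P _ measurableT).
  have intR : P.-integrable setT (EFin \o (fun w => X w * K^-1 + (ln K - 1))).
    by apply: (eq_integrable measurableT _ _ _ (integrableD measurableT intXZ intc)).
  have := le_Rintegral measurableT intL intR (fun w _ => hpt w).
  rewrite (RintegralD measurableT intXZ intc) (RintegralZr _ measurableT intX).
  rewrite Rintegral_cst // R1' mulr1.
  have : Rintegral P setT X * K^-1 <= K * K^-1.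
    by rewrite ler_pM2r ?invr_gt0.
  rewrite mulfV ?gt_eqF //.
  lra.
Qed.
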